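(* Let $\mathbb E$ be a finite-dimensional Euclidean space, let $\lambda\in[0,1]$ be fixed, and for $j=1,2$ let $B_j\subset\mathbb E$ be such that the reflector $R_{B_j}$ is pointwise almost nonexpansive with violation $\tilde\epsilon_j$ at all points of $\Lambda_j$ on $U_j$ (where $\Lambda_j,U_j\subset\mathbb E$). Suppose $R_{B_2}\Lambda_2\subseteq\Lambda_1$ and $R_{B_2}U_2\subseteq U_1$. Then the relaxed Douglas–Rachford mapping $$T=\tfrac{\lambda}{2}(R_{B_1}R_{B_2}+\mathrm{Id})+(1-\lambda)P_{B_2}$$ is pointwise almost $\alpha$-firmly nonexpansive at all $y\in\Lambda_2$ on $U_2$ with constant $\alpha=1/2$ and violation $$\tilde\epsilon=\tfrac12\Big[\big(\lambda\sqrt{1+\tilde\epsilon_1}+1-\lambda\big)^2(1+\tilde\epsilon_2)-1\Big].$$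
   Context: For a nonempty closed set $B$, $P_Bx=\operatorname{argmin}_{b\in B}\|b-x\|$ (set-valued in general), $R_B=2P_B-\mathrm{Id}$. For set-valued maps, composition is $TQx=\bigcup_{z\in Qx}Tz$, and sums and scalar multiples are taken elementwise; for a set $S$, $TS=\bigcup_{a\in S}Ta$. A map $T$ is pointwise almost nonexpansive at $y$ on $U$ with violation $\epsilon\in[0,1)$ if $\|x^+-y^+\|\le\sqrt{1+\epsilon}\|x-y\|$ for all $x\in U$, $x^+\in Tx$, $y^+\in Ty$. It is pointwise almost $\alpha$-firmly nonexpansive at $y$ on $U$ with constant $\alpha\in(0,1)$ and violation $\epsilon\in[0,1)$ if $\|x^+-y^+\|^2\le(1+\epsilon)\|x-y\|^2-\frac{1-\alpha}{\alpha}\|(x^+-x)-(y^+-y)\|^2$ for all $x\in U$, $x^+\in Tx$, $y^+\in Ty$. *)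

(* Defs.v *)
From HB Require Import structures.
From mathcomp Require Import all_boot all_order all_algebra.
From mathcomp Require Import reals.
Set Implicit Arguments. Unset Strict Implicit. Unset Printing Implicit Defensive.
Import Order.TTheory GRing.Theory Num.Theory.
Local Open Scope ring_scope.

Section Defs.
Variables (R : realType) (n : nat).
Notation vec := 'rV[R]_n.

Definition dotv (u v : vec) : R := (u *m v^T) 0 0.
Definition enorm (u : vec) : R := Num.sqrt (dotv u u).

Definition eclosed (B : vec -> Prop) : Prop :=
  forall x, (forall e : R, 0 < e -> exists b, B b /\ enorm (b - x) < e) -> B x.

(* set-valued maps as relations: T x y <-> y \in T x *)
Definition svmap := vec -> vec -> Prop.

Definition proj (B : vec -> Prop) : svmap :=
  fun x p => B p /\ forall b, B b -> enorm (p - x) <= enorm (b - x).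

Definition refl (B : vec -> Prop) : svmap :=
  fun x r => exists p, proj B x p /\ r = 2%:R *: p - x.

Definition svcomp (T Q : svmap) : svmap :=
  fun x y => exists z, Q x z /\ T z y.

Definition svimage (T : svmap) (S : vec -> Prop) : vec -> Prop :=
  fun y => exists a, S a /\ T a y.

Definition vsubset (A B : vec -> Prop) : Prop := forall x, A x -> B x.

Definition relaxedDR (lam : R) (B1 B2 : vec -> Prop) : svmap :=
  fun x t => exists w p, svcomp (refl B1) (refl B2) x w /\ proj B2 x p /\
    t = (lam / 2%:R) *: (w + x) + (1 - lam) *: p.

Definition pane (T : svmap) (y : vec) (U : vec -> Prop) (eps : R) : Prop :=
  forall x xp yp, U x -> T x xp -> T y yp ->
    enorm (xp - yp) <= Num.sqrt (1 + eps) * enorm (x - y).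

Definition pafne (T : svmap) (y : vec) (U : vec -> Prop) (alpha eps : R) : Prop :=
  forall x xp yp, U x -> T x xp -> T y yp ->
    enorm (xp - yp) ^+ 2 <= (1 + eps) * enorm (x - y) ^+ 2
      - (1 - alpha) / alpha * enorm ((xp - x) - (yp - y)) ^+ 2.

End Defs.

(* Main.v *)
Require Import Defs.
From HB Require Import structures.
From mathcomp Require Import all_boot all_order all_algebra.
From mathcomp Require Import reals.
From mathcomp Require Import ring lra.
Import Order.TTheory GRing.Theory Num.Theory.
Local Open Scope ring_scope.
Section S.
Variables (R : realType) (n : nat).
Implicit Types u v w : 'rV[R]_n.
Lemma dotvE u v : dotv u v = \sum_i u 0 i * v 0 i.
Proof. by rewrite /dotv !mxE; apply: eq_bigr => i _; rewrite mxE. Qed.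
Lemma dotvC u v : dotv u v = dotv v u.
Proof. by rewrite !dotvE; apply: eq_bigr => i _; rewrite mulrC. Qed.
Lemma dotvDl u v w : dotv (u + v) w = dotv u w + dotv v w.
Proof. by rewrite !dotvE -big_split; apply: eq_bigr => i _; rewrite mxE mulrDl. Qed.
Lemma dotvZl c u w : dotv (c *: u) w = c * dotv u w.
Proof. by rewrite !dotvE mulr_sumr; apply: eq_bigr => i _; rewrite mxE mulrA. Qed.
Lemma dotvNl u w : dotv (- u) w = - dotv u w.
Proof. by rewrite -scaleN1r dotvZl mulN1r. Qed.
Lemma dotvDr u v w : dotv w (u + v) = dotv w u + dotv w v.
Proof. by rewrite dotvC dotvDl !(dotvC w). Qed.
Lemma dotvZr c u w : dotv w (c *: u) = c * dotv w u.
Proof. by rewrite dotvC dotvZl dotvC. Qed.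
Lemma dotvNr u w : dotv w (- u) = - dotv w u.
Proof. by rewrite dotvC dotvNl dotvC. Qed.
Lemma dotv_ge0 u : 0 <= dotv u u.
Proof. by rewrite dotvE; apply: sumr_ge0 => i _; rewrite -expr2 sqr_ge0. Qed.
Lemma enorm_ge0 u : 0 <= enorm u.
Proof. exact: sqrtr_ge0. Qed.
Lemma enorm_sq u : enorm u ^+ 2 = dotv u u.
Proof. by rewrite /enorm sqr_sqrtr // dotv_ge0. Qed.
Definition dotvE2 := (dotvDl, dotvDr, dotvZl, dotvZr, dotvNl, dotvNr).

Lemma CS u v : dotv u v <= enorm u * enorm v.
Proof.
have key : forall a b : 'rV[R]_n, enorm a = 0 -> dotv a b <= 0.
  move=> a b ha.
  have haa : dotv a a = 0 by rewrite -enorm_sq ha expr0n.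
  rewrite leNgt; apply/negP => hab.
  set t := (dotv b b + 1) / (2 * dotv a b).
  have := dotv_ge0 (t *: a - b).
  rewrite !dotvE2 haa (dotvC b a).
  have -> : t * (t * 0 + - dotv a b) + - (t * dotv a b + - dotv b b)
      = dotv b b - 2 * (t * dotv a b) by ring.
  have -> : t * dotv a b = (dotv b b + 1) / 2.
    rewrite /t; field; by rewrite gt_eqF.
  lra.
have [hu|hu] := eqVneq (enorm u) 0; first by rewrite hu mul0r key.
have [hv|hv] := eqVneq (enorm v) 0; first by rewrite hv mulr0 dotvC key.
have pu : 0 < enorm u by rewrite lt_def hu enorm_ge0.
have pv : 0 < enorm v by rewrite lt_def hv enorm_ge0.
have := dotv_ge0 (enorm v *: u - enorm u *: v).
rewrite !dotvE2 -!enorm_sq (dotvC v u).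
move=> h.
have hp : 0 < enorm u * enorm v by rewrite mulr_gt0.
nra.
Qed.
Lemma parallelo (e d : 'rV[R]_n) :
  enorm ((2%:R)^-1 *: (e + d)) ^+ 2 + enorm ((2%:R)^-1 *: (e - d)) ^+ 2
  = (enorm e ^+ 2 + enorm d ^+ 2) / 2%:R.
Proof. rewrite !enorm_sq !dotvE2 (dotvC d e). by field. Qed.

Lemma comb_sq (l m : R) (a b : 'rV[R]_n) :
  enorm (l *: a + m *: b) ^+ 2 = l ^+ 2 * enorm a ^+ 2 + 2%:R * l * m * dotv a b
       + m ^+ 2 * enorm b ^+ 2.
Proof. by rewrite !enorm_sq !dotvE2 (dotvC b a); ring. Qed.
End S.
Arguments comb_sq {R n}.
Arguments dotvC {R n}. Arguments CS {R n}. Arguments enorm_ge0 {R n}. Arguments parallelo {R n}.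

Theorem lemma3 (R : realType) (n : nat) (lam : R)
  (B1 B2 Lam1 Lam2 U1 U2 : 'rV[R]_n -> Prop) (eps1 eps2 : R) :
  0 <= lam <= 1 ->
  (exists b, B1 b) -> eclosed B1 ->
  (exists b, B2 b) -> eclosed B2 ->
  0 <= eps1 < 1 -> 0 <= eps2 < 1 ->
  (forall y, Lam1 y -> pane (refl B1) y U1 eps1) ->
  (forall y, Lam2 y -> pane (refl B2) y U2 eps2) ->
  vsubset (svimage (refl B2) Lam2) Lam1 ->
  vsubset (svimage (refl B2) U2) U1 ->
  forall y, Lam2 y ->
    pafne (relaxedDR lam B1 B2) y U2 (1 / 2%:R)
      ((1 / 2%:R) * ((lam * Num.sqrt (1 + eps1) + 1 - lam) ^+ 2 * (1 + eps2) - 1)).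
Proof.
move=> /andP[l0 l1] _ _ _ _ /andP[e10 _] /andP[e20 _] H1 H2 HL HU y Ly.
move=> x tx ty Ux [wx [px [[zx [rzx rwx]] [ppx ->]]]] [wy [py [[zy [rzy rwy]] [ppy ->]]]].
set s1 := Num.sqrt (1 + eps1); set s2 := Num.sqrt (1 + eps2).
have s1p : 0 <= s1 by apply: sqrtr_ge0.
have s2p : 0 <= s2 by apply: sqrtr_ge0.
have hz : enorm (zx - zy) <= s2 * enorm (x - y) by apply: (H2 y Ly x).
have ha : enorm (wx - wy) <= s1 * (s2 * enorm (x - y)).
  apply: le_trans (ler_wpM2l s1p hz).
  apply: (H1 zy _ zx) => //; [apply: HL; exists y | apply: HU; exists x]; by [].
have hb : enorm ((2%:R *: px - x) - (2%:R *: py - y)) <= s2 * enorm (x - y).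
  by apply: (H2 y Ly x) => //; [exists px | exists py].
set a := wx - wy. set b := (2%:R *: px - x) - (2%:R *: py - y). set d := x - y.
set e := lam *: a + (1 - lam) *: b.
set Tx := _ *: (wx + x) + _. set Ty := _ *: (wy + y) + _.
have E1 : Tx - Ty = (2%:R)^-1 *: (e + d).
  by rewrite /Tx /Ty /e /a /b /d; apply/rowP => ?; rewrite !mxE; field.
have E2 : Tx - x - (Ty - y) = (2%:R)^-1 *: (e - d).
  by rewrite /Tx /Ty /e /a /b /d; apply/rowP => ?; rewrite !mxE; field.
rewrite E1 E2.
have he : enorm e ^+ 2 <= ((lam * s1 + 1 - lam) * s2) ^+ 2 * enorm d ^+ 2.
  have cs := @CS _ _ a b.
  have na := @enorm_ge0 _ _ a; have nb := @enorm_ge0 _ _ b; have nd := @enorm_ge0 _ _ d.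
  have -> : enorm e ^+ 2 = lam ^+ 2 * enorm a ^+ 2 + 2%:R * lam * (1 - lam) * dotv a b
       + (1 - lam) ^+ 2 * enorm b ^+ 2.
    by rewrite /e comb_sq.
  have l1' : 0 <= 1 - lam by lra.
  have h1 : lam * (1 - lam) * dotv a b <= lam * (1 - lam) * (enorm a * enorm b).
    by apply: ler_wpM2l => //; apply: mulr_ge0.
  have h2 : lam * enorm a + (1 - lam) * enorm b <= (lam * s1 + 1 - lam) * s2 * enorm d.
    have := ler_wpM2l l0 ha; have := ler_wpM2l l1' hb. move=> p q. rewrite /a /b /d; lra.
  have h3 : 0 <= lam * enorm a + (1 - lam) * enorm b.
    by apply: addr_ge0; apply: mulr_ge0.
  have := ler_pM h3 h3 h2 h2. move=> h4.
  set X := lam * enorm a + (1 - lam) * enorm b in h2 h3 h4.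
  set Y := (lam * s1 + 1 - lam) * s2 * enorm d in h2 h4.
  set P := lam * (1 - lam) * dotv a b in h1.
  set Q := lam * (1 - lam) * (enorm a * enorm b) in h1.
  have -> : lam ^+ 2 * enorm a ^+ 2 + 2%:R * lam * (1 - lam) * dotv a b +
    (1 - lam) ^+ 2 * enorm b ^+ 2 = X * X - 2%:R * (Q - P) by rewrite /X /P /Q; ring.
  have -> : ((lam * s1 + 1 - lam) * s2) ^+ 2 * enorm d ^+ 2 = Y * Y by rewrite /Y; ring.
  clearbody X Y P Q. lra.
have hpar := @parallelo _ _ e d.
have -> : (1 - 1 / 2%:R) / (1 / 2%:R) = 1 :> R by field.
have s2sq : s2 ^+ 2 = 1 + eps2.
  by rewrite /s2 sqr_sqrtr // addr_ge0.
rewrite exprMn s2sq in he.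
move: hpar he.
set A := enorm (_ *: (e + d)) ^+ 2. set B := enorm (_ *: (e - d)) ^+ 2.
set K := (lam * s1 + 1 - lam) ^+ 2 * (1 + eps2).
set E := enorm e ^+ 2. set D := enorm d ^+ 2.
clearbody A B K E D => hpar he.
have -> : (1 + 1 / 2%:R * (K - 1)) * D - 1 * B = (K * D + D) / 2%:R - B by field.
lra.
Qed.
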